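(* Let $m,n\ge1$ and let $\theta\vdash mn$ be $m$-splittable with $m$-split $(\theta^{(0)},\dots,\theta^{(m-1)})$. Then \[ H_\theta(x) = m^{mn} \prod_{r=0}^{m-1} \prod_{j=1}^{m} H_{\theta^{(r)}} \left( \frac{x+r-m+j}{m} \right). \]
   Context: With the rising factorial $x^{(k)}=x(x+1)\cdots(x+k-1)$, $H_\theta(x)=\prod_{i=1}^{l(\theta)}(x-i+1)^{(\theta_i)}=\prod_{w\in\theta}(x+c(w))$, where $c(w)=j-i$ is the content of the cell $w$ in row $i$, column $j$; $H_\emptyset=1$. A set $S\subseteq\mathbb{Z}$ satisfies the charge condition if $S\cap\mathbb{Z}_{\ge0}$ and $\mathbb{Z}_{<0}\setminus S$ are finite and have the same cardinality. For a partition $\lambda=(\lambda_1\ge\lambda_2\ge\cdots)$ (with $\lambda_k=0$ for $k>l(\lambda)$), $S_\lambda=\{\lambda_k-k: k\ge1\}$; $\lambda\mapsto S_\lambda$ is a bijection from partitions to sets satisfying the charge condition. The $m$-split of a set $S$ is $(S_0,\dots,S_{m-1})$ with $S_r=\{a\in\mathbb{Z}: ma+r\in S\}$. A partition $\theta$ is $m$-splittable if every $S_r$ in the $m$-split of $S_\theta$ satisfies the charge condition; its $m$-split is then $(\theta^{(0)},\dots,\theta^{(m-1)})$ where $\theta^{(r)}$ is the partition with $S_{\theta^{(r)}}=S_r$. *)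

(* Defs.v *)
From HB Require Import structures.
From mathcomp Require Import all_boot all_order all_algebra.
Set Implicit Arguments. Unset Strict Implicit. Unset Printing Implicit Defensive.
Import Order.TTheory GRing.Theory Num.Theory.

Definition is_partition (la : seq nat) : bool :=
  sorted geq la && all (fun a => 0 < a) la.

Definition partition_of (la : seq nat) (N : nat) : Prop :=
  is_partition la /\ sumn la = N.

(* lambda_k for k >= 1 (zero beyond the length) *)
Definition part (la : seq nat) (k : nat) : nat := nth 0 la k.-1.

Definition Sset (la : seq nat) : int -> Prop :=
  fun a => exists k : nat, (0 < k)%N /\ a = (Posz (part la k) - Posz k)%R.

Definition charge_condition (S : int -> Prop) : Prop :=
  exists (l1 l2 : seq int),
    [/\ uniq l1, uniq l2, size l1 = size l2,
        (forall a : int, a \in l1 <-> (S a /\ (0 <= a)%R)) &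
        (forall a : int, a \in l2 <-> ((a < 0)%R /\ ~ S a))].

Definition msplit (m r : nat) (S : int -> Prop) : int -> Prop :=
  fun a => S (Posz m * a + Posz r)%R.

Definition m_splittable (m : nat) (la : seq nat) : Prop :=
  forall r : nat, (r < m)%N -> charge_condition (msplit m r (Sset la)).

Local Open Scope ring_scope.
Definition Hpoly (R : ringType) (th : seq nat) (x : R) : R :=
  \prod_(i < size th) \prod_(j < nth 0%N th i) (x + (Posz j - Posz i)%:~R).

(* Main.v *)
Require Import Defs.
From HB Require Import structures.
From mathcomp Require Import all_boot all_order all_algebra.
From mathcomp Require Import zify ring.
Import Order.TTheory GRing.Theory Num.Theory.
Local Open Scope ring_scope.

Section Gen.
Variables (T : Type) (idx : T) (op : Monoid.law idx).

Lemma big_decomp (m N : nat) (F : nat -> T) :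
  \big[op/idx]_(0 <= n < m * N) F n =
  \big[op/idx]_(0 <= q < N) \big[op/idx]_(0 <= j < m) F (m * q + j)%N.
Proof.
elim: N => [|N IH]; first by rewrite muln0 !big_geq.
rewrite big_nat_recr //= -IH mulnS addnC (big_cat_nat _ (leq_addr m (m * N))) //=.
congr (op _ _).
rewrite -[X in \big[_/_]_(X <= _ < _) _](add0n (m * N)%N) big_addn. have -> : (m * N + m - m * N = m)%N by lia.
by apply: eq_bigr => j _; rewrite addnC.
Qed.

Lemma big_shift (N A a : nat) (h : nat -> T) :
  (a <= A)%N -> (forall n, (n < A)%N || (N <= n)%N -> h n = idx) ->
  \big[op/idx]_(0 <= n < N) h (n + a)%N = \big[op/idx]_(0 <= n < N + A) h n.
Proof.
move=> aA h1.
rewrite [RHS](big_cat_nat (leq0n a)) /=; last by lia.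
rewrite [X in op X _]big1_seq ?Monoid.mul1m; last first.
  by move=> n; rewrite mem_index_iota => /andP[_ H]; apply: h1; rewrite (leq_trans H aA).
rewrite (big_cat_nat (leq_addl N a)) /=; last by lia.
rewrite [X in op _ X]big1_seq ?Monoid.mulm1; last first.
  move=> n; rewrite mem_index_iota => /and3P[_ H1 H2]; apply: h1; apply/orP; right; lia.
rewrite [RHS](_ : _ = \big[op/idx]_(0 + a <= i < N + a) h i); last by rewrite add0n.
rewrite big_addn. by have -> : (N + a - a = N)%N by lia.
Qed.

End Gen.

Definition sb (la : seq nat) (k : nat) : int := (Posz (part la k) - Posz k)%R.
Definition Lset (la : seq nat) (K : nat) : seq int := map (sb la) (iota 1 K).
Definition N1 (la : seq nat) (c : int) (K : nat) : nat := count (fun a => c <= a) (Lset la K).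
Definition cnt (la : seq nat) (c : int) : nat :=
  count (fun i : nat => (- (i%:Z) <= c) && (c < (nth 0%N la i)%:Z - i%:Z)) (iota 0 (size la)).
Definition cp (m r : nat) (c : int) : int := - ((r%:Z - c) %/ m%:Z)%Z.

Lemma sset0 a : Sset [::] a <-> a < 0.
Proof.
split; first by case=> k [k0 ->]; rewrite /part nth_nil; lia.
move=> a0; exists `|a|%N; split; first lia.
rewrite /part nth_nil; lia.
Qed.

Lemma Lmem la K a : (size la <= K)%N -> - (K%:Z) <= a -> (a \in Lset la K) <-> Sset la a.
Proof.
move=> sK aK; split.
  case/mapP=> k; rewrite mem_iota => /andP[k1 _] ->; exists k; split => //.
move=> [k [k0 Ea]]; subst a; apply/mapP; exists k => //; rewrite mem_iota k0 /=.
case: (leqP k K) => kK; first by lia.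
exfalso; move: aK; rewrite /part nth_default; last by lia.
lia.
Qed.

Lemma nth_sumn (la : seq nat) i : (nth 0%N la i <= sumn la)%N.
Proof.
elim: la i => [|x la IH] [|i] //=; first by rewrite leq_addr.
exact: leq_trans (IH i) (leq_addl _ _).
Qed.

Lemma sb_dec la k k' : is_partition la -> (0 < k)%N -> (k < k')%N -> sb la k' < sb la k.
Proof.
case/andP=> srt _ k0 kk'.
have : (part la k' <= part la k)%N.
  rewrite /part; case: (ltnP k'.-1 (size la)) => h; last by rewrite (nth_default _ h).
  have tr : transitive geq by move=> y x z h1 h2; exact: leq_trans h2 h1.
  have rf : reflexive geq by move=> x; exact: leqnn.
  have := @sorted_leq_nth _ geq tr rf 0%N la srt (k.-1) (k'.-1).
  rewrite !inE => H; apply: H; first by lia.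
  - exact: h.
  - lia.
rewrite /sb; lia.
Qed.

Lemma Luniq la K : is_partition la -> uniq (Lset la K).
Proof.
move=> P; rewrite map_inj_in_uniq ?iota_uniq // => k k'.
rewrite !mem_iota => /andP[k0 _] /andP[k'0 _] E.
case: (ltngtP k k') => // h.
- by have := @sb_dec la _ _ P k0 h; rewrite E ltxx.
- by have := @sb_dec la _ _ P k'0 h; rewrite E ltxx.
Qed.

Lemma Lrange la K a : a \in Lset la K -> - (K%:Z) <= a /\ a < (sumn la)%:Z.
Proof.
case/mapP=> k; rewrite mem_iota => /andP[k1 kK] ->.
have := nth_sumn la k.-1; rewrite /sb /part; lia.
Qed.

Lemma count_sum T (P : pred T) (s : seq T) : count P s = (\sum_(x <- s) (P x : nat))%N.
Proof. by elim: s => [|x s IH]; rewrite ?big_nil ?big_cons //= IH. Qed.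

Lemma CW (L : seq int) (K U : nat) (P : pred int) :
  uniq L -> (forall a, a \in L -> - (K%:Z) <= a /\ a < U%:Z) ->
  count P L = (\sum_(0 <= q < K + U) (((q%:Z - K%:Z)%R \in L) && P (q%:Z - K%:Z)%R : nat))%N.
Proof.
move=> uL rL.
rewrite (_ : (\sum_(0 <= q < K + U) _)%N = count (fun q : nat => (q%:Z - K%:Z \in L) && P (q%:Z - K%:Z)) (iota 0 (K + U))); last first.
  by rewrite count_sum /index_iota subn0.
rewrite -(count_map (fun q : nat => q%:Z - K%:Z) (fun a => (a \in L) && P a)).
set L' := map _ _.
have uL' : uniq L'.
  by rewrite map_inj_uniq ?iota_uniq // => x y; lia.
rewrite [RHS](@eq_count _ _ (predI P (mem L))); last by move=> x /=; rewrite andbC.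
rewrite -count_filter.
have pe : perm_eq L [seq x <- L' | x \in L].
  apply: uniq_perm => //; first exact: filter_uniq.
  move=> x; rewrite mem_filter; apply/idP/idP; last by case/andP.
  move=> xL; rewrite xL /=; have [h1 h2] := rL x xL.
  apply/mapP; exists (absz (x + K%:Z)); last by lia.
  rewrite mem_iota; lia.
by move/permP: pe => ->.
Qed.

Lemma count_split (T : eqType) (a b c : pred T) (s : seq T) :
  (forall x, x \in s -> (c x : nat) = (a x + b x)%N) ->
  count c s = (count a s + count b s)%N.
Proof.
elim: s => [|x s IH] //= H.
rewrite IH; last by move=> y ys; apply: H; rewrite inE ys orbT.
rewrite (H x (mem_head _ _)); lia.
Qed.

Lemma B0 la c K : (size la <= K)%N -> (cnt la c + N1 [::] c K)%N = N1 la c K.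
Proof.
move=> sK; rewrite /N1 /Lset !count_map.
have -> : iota 1 K = map (addn 1) (iota 0 K) by rewrite -iotaDl.
rewrite !count_map.
rewrite [RHS](@count_split _ (fun i : nat => c < - (i%:Z))
   (fun i : nat => (- (i%:Z) <= c) && (c < (nth 0%N la i)%:Z - i%:Z))); last first.
  move=> i _; change nat in i; rewrite /= /sb /part /= add1n /= add0n.
  case: (lerP (- (i%:Z)) c) => h /=.
    rewrite add0n; congr nat_of_bool; apply/idP/idP; clear h; lia.
  by rewrite (_ : (c <= _) = true) //; lia.
rewrite addnC; congr addn.
  apply: eq_count => i /=; rewrite /sb /part /= add1n /= nth_nil; apply/idP/idP; lia.
rewrite /cnt -(subnKC sK) iotaD count_cat add0n.
rewrite (@eq_in_count _ _ pred0 (iota (size la) (K - size la))); last first.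
  move=> i; rewrite mem_iota => /andP[h1 _] /=; rewrite nth_default //; lia.
by rewrite count_pred0 addn0.
Qed.

Lemma cp1 (m r : nat) (c a : int) : (0 < m)%N ->
  (c <= m%:Z * a + r%:Z) = (cp m r c <= a).
Proof.
move=> m0; rewrite /cp.
have := divz_eq (r%:Z - c) m%:Z.
have h1 : 0 <= ((r%:Z - c) %% m%:Z)%Z by apply: modz_ge0; lia.
have h2 : ((r%:Z - c) %% m%:Z)%Z < m%:Z by apply: ltz_pmod; lia.
move: h1 h2; set q := ((r%:Z - c) %/ m%:Z)%Z; set rho := ((r%:Z - c) %% m%:Z)%Z.
move=> *; apply/idP/idP => ?; nia.
Qed.

Lemma SL (la : seq nat) (mu : nat -> seq nat) (m K U : nat) (c : int) :
 (0 < m)%N -> is_partition la -> (forall r, (r < m)%N -> is_partition (mu r)) ->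
 (forall r, (r < m)%N -> forall a, Sset (mu r) a <-> Sset la (m%:Z * a + r%:Z)) ->
 (size la <= m * K)%N -> (sumn la <= m * U)%N ->
 (forall r, (r < m)%N -> (size (mu r) <= K)%N /\ (sumn (mu r) <= U)%N) ->
 N1 la c (m * K) = (\sum_(r < m) N1 (mu r) (cp m r c) K)%N.
Proof.
move=> m0 pla pmu hS sK sU hmu.
rewrite /N1 (@CW _ (m * K) (m * U)); first last.
- move=> a /Lrange [h1 h2]; split => //; lia.
- exact: Luniq.
rewrite -mulnDr big_decomp exchange_big /= big_mkord.
apply: eq_bigr => [[r hr]] _ /=.
have [sKr sUr] := hmu r hr.
rewrite (@CW _ K U); first last.
- move=> a /Lrange [h1 h2]; split => //; lia.
- exact: Luniq (pmu r hr).
apply: eq_big_nat => q /andP[_ hq].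
have E : ((m * q + r)%N%:Z - (m * K)%N%:Z)%R = (m%:Z * (q%:Z - K%:Z) + r%:Z)%R by lia.
rewrite E -cp1 //; congr (nat_of_bool (_ && _)).
have ha : - (K%:Z) <= q%:Z - K%:Z by lia.
have h2 : - ((m * K)%N%:Z) <= m%:Z * (q%:Z - K%:Z) + r%:Z by lia.
apply/idP/idP.
- move/(Lmem _ _ _ sK h2) => H.
  by apply/(Lmem _ _ _ sKr ha); apply/(hS r hr).
- move/(Lmem _ _ _ sKr ha)/(hS r hr) => H.
  by apply/(Lmem _ _ _ sK h2).
Qed.

Lemma Bcnt (th : seq nat) (ths : nat -> seq nat) (m M : nat) (c : int) :
 (0 < m)%N -> is_partition th -> (forall r, (r < m)%N -> is_partition (ths r)) ->
 (forall r, (r < m)%N -> forall a, Sset (ths r) a <-> Sset th (m%:Z * a + r%:Z)) ->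
 (size th <= m * M)%N -> (sumn th <= m * M)%N ->
 (forall r, (r < m)%N -> (size (ths r) <= M)%N /\ (sumn (ths r) <= M)%N) ->
 cnt th c = (\sum_(r < m) cnt (ths r) (cp m r c))%N.
Proof.
move=> m0 pth pths hS sK sU hr.
have e1 := B0 th c (m * M) sK.
have h0 : forall r, (r < m)%N -> forall a, Sset [::] a <-> Sset [::] (m%:Z * a + r%:Z).
  by move=> r rm a; rewrite !sset0; split; nia.
rewrite (@SL th ths m M M c) // (@SL [::] (fun _ => [::]) m M M c) // in e1.
have e2 : (\sum_(r < m) N1 (ths r) (cp m r c) M)%N =
          (\sum_(r < m) (cnt (ths r) (cp m r c) + N1 [::] (cp m r c) M))%N.
  by apply: eq_bigr => [[r rm]] _; rewrite B0 //; case: (hr r rm).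
rewrite e2 big_split /= in e1.
by apply/eqP; rewrite -(eqn_add2r (\sum_(r < m) N1 [::] (cp m r c) M)%N) e1.
Qed.

Definition Hg (R : ringType) (la : seq nat) (g : int -> R) : R :=
  \prod_(i < size la) \prod_(j < nth 0%N la i) g (Posz j - Posz i).
Arguments Hg {R}.

Lemma Wi (R : comRingType) (N a l : nat) (F : nat -> R) : (a + l <= N)%N ->
  \prod_(0 <= n < N) F n ^+ ((a <= n) && (n < a + l))%N = \prod_(0 <= j < l) F (j + a)%N.
Proof.
move=> h.
rewrite (big_cat_nat (leq0n a)) /=; last by lia.
rewrite [X in X * _]big1_seq ?mul1r; last first.
  by move=> n /andP[_]; rewrite mem_index_iota => /andP[_ H]; rewrite leqNgt H expr0.
rewrite (big_cat_nat (leq_addr l a)) //=.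
rewrite [X in _ * X]big1_seq ?mulr1; last first.
  by move=> n /andP[_]; rewrite mem_index_iota => /andP[H _]; rewrite ltnNge H andbF expr0.
rewrite [LHS](_ : _ = \prod_(0 + a <= i < l + a) F i ^+ ((a <= i) && (i < a + l))%N); last by rewrite add0n addnC.
rewrite big_addn addnK; apply: eq_big_nat => j /andP[_ hj].
by rewrite leq_addl addnC ltn_add2l hj expr1.
Qed.

Lemma Arep (R : comRingType) (la : seq nat) (g : int -> R) (M : nat) :
  (size la <= M)%N -> (sumn la <= M)%N ->
  Hg la g = \prod_(0 <= n < M + M) g (n%:Z - M%:Z) ^+ cnt la (n%:Z - M%:Z).
Proof.
move=> sM uM.
rewrite /cnt.
under eq_bigr => n _ do rewrite count_sum -prodrXr.
rewrite exchange_big /= /Hg.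
transitivity (\prod_(0 <= i < size la) \prod_(j < nth 0%N la i) g (Posz j - Posz i)); first by rewrite big_mkord.
rewrite /index_iota subn0.
apply: eq_big_seq => i; rewrite mem_iota => /andP[_ hi].
have hn := nth_sumn la i.
rewrite (@eq_bigr _ _ _ _ _ _ _ (fun n => g (n%:Z - M%:Z) ^+ ((M - i <= n) && (n < M - i + nth 0%N la i))%N)); last first.
  move=> n _; congr (_ ^+ nat_of_bool _); apply/idP/idP; lia.
rewrite Wi; last by lia.
rewrite big_mkord; apply: eq_bigr => j _; congr g; lia.
Qed.

Lemma cp2 (m r j : nat) (a : int) : (0 < m)%N -> (j < m)%N ->
  cp m r (m%:Z * a + (r%:Z - m%:Z + j%:Z + 1)) = a.
Proof.
move=> m0 jm.
have h1 : cp m r (m%:Z * a + (r%:Z - m%:Z + j%:Z + 1)) <= a by rewrite -cp1 //; lia.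
have h2 : ~~ (cp m r (m%:Z * a + (r%:Z - m%:Z + j%:Z + 1)) <= a - 1) by rewrite -cp1 //; lia.
lia.
Qed.

Lemma Cre (R : comRingType) (m M : nat) (F : nat -> int -> nat) (G : int -> R) :
 (0 < m)%N -> (forall r c', (r < m)%N -> (c' <= - (M%:Z)) || ((M%:Z) - 1 <= c') -> F r c' = 0%N) ->
 \prod_(0 <= n < m * M + m * M) G (n%:Z - (m * M)%N%:Z) ^+ (\sum_(r < m) F r (cp m r (n%:Z - (m * M)%N%:Z)))%N =
 \prod_(r < m) \prod_(0 <= q < M + M) \prod_(j < m)
    G (m%:Z * (q%:Z - M%:Z) + (r%:Z - m%:Z + j%:Z + 1)) ^+ F r (q%:Z - M%:Z).
Proof.
move=> m0 hF.
under eq_bigr => n _ do rewrite -prodrXr.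
rewrite exchange_big /=; apply: eq_bigr => [[r hr]] _ /=.
pose h' := fun n : nat => G (n%:Z - (m * M)%N%:Z - m%:Z) ^+ F r (cp m r (n%:Z - (m * M)%N%:Z - m%:Z)).
transitivity (\prod_(0 <= n < m * (M + M)) h' (n + m)%N).
  rewrite mulnDr; apply: eq_bigr => n _.
  have E : ((n + m)%N%:Z - (m * M)%N%:Z - m%:Z) = n%:Z - (m * M)%N%:Z by lia.
  by rewrite /h' E.
transitivity (\prod_(0 <= n < m * (M + M)) h' (n + r.+1)%N); last first.
  rewrite big_decomp; apply: eq_bigr => q _; rewrite big_mkord; apply: eq_bigr => j _.
  have Ea : ((m * q + j + r.+1)%N%:Z - (m * M)%N%:Z - m%:Z) = m%:Z * (q%:Z - M%:Z) + (r%:Z - m%:Z + j%:Z + 1) by lia.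
  by rewrite /h' Ea cp2.
have hz : forall n, (n < m)%N || (m * (M + M) <= n)%N -> h' n = 1.
  move=> n hn; rewrite /h' hF ?expr0 //.
  case/orP: hn => hn.
  - by apply/orP; left; rewrite -cp1 //; lia.
  - apply/orP; right.
    have : ~~ (cp m r (n%:Z - (m * M)%N%:Z - m%:Z) <= M%:Z - 2) by rewrite -cp1 //; lia.
    lia.
rewrite (@big_shift _ _ _ _ m m h' (leqnn m) hz).
by rewrite (@big_shift _ _ _ _ m r.+1 h' hr hz).
Qed.

Lemma Hg_ext (R : ringType) la (g1 g2 : int -> R) : (forall c, g1 c = g2 c) -> Hg la g1 = Hg la g2.
Proof. by move=> e; apply: eq_bigr => i _; apply: eq_bigr => j _. Qed.

Lemma sumn_ord la : (\sum_(i < size la) nth 0%N la i)%N = sumn la.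
Proof. by rewrite sumnE (big_nth 0%N) big_mkord. Qed.

Lemma sum_ge (n : nat) (F : 'I_n -> nat) i : (F i <= \sum_(j < n) F j)%N.
Proof. by rewrite (bigD1 i) //= leq_addr. Qed.

Lemma cnt0 la (M : nat) c : (size la + 1 <= M)%N -> (sumn la + 1 <= M)%N ->
  (c <= - (M%:Z)) || ((M%:Z) - 1 <= c) -> cnt la c = 0%N.
Proof.
move=> sM uM hc; rewrite /cnt (@eq_in_count _ _ pred0) ?count_pred0 // => i.
rewrite mem_iota => /andP[_ hi] /=.
have := nth_sumn la i => hn.
apply/negbTE/negP => /andP[h1 h2].
case/orP: hc => hc; lia.
Qed.

Theorem mainTheorem4 (R : numFieldType) (m n : nat) (theta : seq nat)
    (thetas : nat -> seq nat) (x : R) :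
  (1 <= m)%N -> (1 <= n)%N ->
  partition_of theta (m * n) ->
  m_splittable m theta ->
  (forall r : nat, (r < m)%N ->
     is_partition (thetas r) /\
     (forall a : int, Sset (thetas r) a <-> msplit m r (Sset theta) a)) ->
  Hpoly theta x =
    (m%:R) ^+ (m * n) *
    \prod_(r < m) \prod_(j < m)
       Hpoly (thetas r) ((x + (r : nat)%:R - m%:R + (j : nat).+1%:R) / m%:R).
Proof.
move=> m1 _ [pth sth] _ hths.
have m0 : (0 < m)%N by [].
have mR : (m%:R : R) != 0 by rewrite pnatr_eq0 -lt0n.
pose M := (1 + size theta + sumn theta + \sum_(r < m) (size (thetas r) + sumn (thetas r)))%N.
have hM : forall r, (r < m)%N -> (size (thetas r) + 1 <= M)%N /\ (sumn (thetas r) + 1 <= M)%N.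
  move=> r rm; have := @sum_ge m (fun r : 'I_m => (size (thetas r) + sumn (thetas r))%N) (Ordinal rm).
  rewrite /M /= => h; split; lia.
have MmM : (M <= m * M)%N by rewrite leq_pmull.
have sK : (size theta <= m * M)%N by rewrite /M; lia.
have sU : (sumn theta <= m * M)%N by rewrite /M; lia.
have pths : forall r, (r < m)%N -> is_partition (thetas r) by move=> r rm; case: (hths r rm).
have hS : forall r, (r < m)%N -> forall a, Sset (thetas r) a <-> Sset theta (m%:Z * a + r%:Z).
  by move=> r rm a; case: (hths r rm) => _ ->.
have hMr : forall r, (r < m)%N -> (size (thetas r) <= M)%N /\ (sumn (thetas r) <= M)%N.
  by move=> r rm; case: (hM r rm) => *; split; lia.
pose g' := fun c : int => (x + c%:~R) / m%:R.
have step1 : Hg theta g' = Hpoly theta x * (m%:R^-1) ^+ (m * n).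
  rewrite /Hg /Hpoly -sth -sumn_ord -prodrXr -big_split /=.
  apply: eq_bigr => i _; rewrite /g' big_split /= prodr_const card_ord //.
rewrite (_ : Hpoly theta x = m%:R ^+ (m * n) * Hg theta g'); last first.
  by rewrite step1 mulrCA -exprMn mulfV // expr1n mulr1.
congr (_ * _).
rewrite (@Arep _ _ _ (m * M)) //.
under eq_bigr => k _ do rewrite (@Bcnt theta thetas m M) //.
rewrite (@Cre _ m M (fun r c => cnt (thetas r) c)); last first.
  - move=> r c' rm hc; case: (hM r rm) => h1 h2; exact: cnt0 h1 h2 hc.
  - by [].
apply: eq_bigr => [[r rm]] _ /=; rewrite exchange_big /=.
apply: eq_bigr => j _.
have [sMr uMr] := hMr r rm.
rewrite -(@Arep _ _ (fun c => g' (m%:Z * c + (r%:Z - m%:Z + (j : nat)%:Z + 1))) M) //.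
rewrite [RHS](_ : _ = Hg (thetas r) (fun c : int => (x + (r : nat)%:R - m%:R + (j : nat).+1%:R) / m%:R + c%:~R)) //.
apply: Hg_ext => c; rewrite /g'.
rewrite !intrD !intrM !intrN -!pmulrn.
by field.
Qed.
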